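(* Let $B=(B_t)_{t\ge 0}$ be a standard Brownian motion with $B_0=0$ and let $c>0$. Define stopping times $(T_m)_{m\ge 0}$ and a process $U=(U_t)_{t\ge0}$ as follows. On the event $A$ that $B$ reaches $c$ before $-c$: $T_0=\inf\{t\ge0: B_t=c\}$; for $k\ge0$, $T_{2k+1}$ is the first time $t\ge T_{2k}$ with $B_t-\sup_{T_{2k}\le s\le t}B_s=-2c$, and $T_{2k+2}$ is the first time $t\ge T_{2k+1}$ with $B_t-\inf_{T_{2k+1}\le s\le t}B_s=2c$. Set $U_t=0$ for $0\le t\le T_0$; $U_t=\sup_{T_{2k}\le s\le t}B_s-c$ for $T_{2k}<t\le T_{2k+1}$; $U_t=\inf_{T_{2k+1}\le s\le t}B_s+c$ for $T_{2k+1}<t\le T_{2k+2}$ ($k\ge 0$). On the complementary event $A^c$ ($B$ reaches $-c$ before $c$): $T_0=\inf\{t\ge0: B_t=-c\}$; for $k\ge0$, $T_{2k+1}$ is the first time $t\ge T_{2k}$ with $B_t-\inf_{T_{2k}\le s\le t}B_s=2c$, and $T_{2k+2}$ is the first time $t\ge T_{2k+1}$ with $B_t-\sup_{T_{2k+1}\le s\le t}B_s=-2c$. Set $U_t=0$ for $0\le t\le T_0$; $U_t=\inf_{T_{2k}\le s\le t}B_s+c$ for $T_{2k}<t\le T_{2k+1}$; $U_t=\sup_{T_{2k+1}\le s\le t}B_s-c$ for $T_{2k+1}<t\le T_{2k+2}$ ($k\ge0$). Then (almost surely) $U$ is the only continuous process with finite variation satisfying: (a) $U_0=0$; (b) $B_t-c\le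 U_t\le B_t+c$ for all $t\ge0$; (c) $U$ is nondecreasing on every interval on which $U<B+c$ strictly; (d) $U$ is nonincreasing on every interval on which $U>B-c$ strictly. (In particular $U$ is constant on intervals where $B-c<U<B+c$.)
   Context: Here $B_t$ models the logarithm of a reference market price $p=\exp B$, $U_t$ the logarithm of an automated-market-maker price, and $c=\log(\gamma^{-1})$ for a fee parameter $\gamma\in(0,1)$. The stopping times $T_m$ are almost surely finite for every $m$. *)

(* Defs.v *)
From HB Require Import structures.
From mathcomp Require Import all_boot all_order all_algebra.
From mathcomp Require Import all_classical all_reals all_analysis.
Set Implicit Arguments. Unset Strict Implicit. Unset Printing Implicit Defensive.
Import Order.TTheory GRing.Theory Num.Theory.
Import numFieldNormedType.Exports.
Local Open Scope classical_set_scope.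
Local Open Scope ring_scope.

Section Defs.
Context {R : realType}.
Implicit Types (b v : R -> R) (c s t : R).

Definition run_sup b s t : R := sup [set b u | u in `[s, t]].
Definition run_inf b s t : R := inf [set b u | u in `[s, t]].

(* first time t >= s (s possibly +oo) at which P t holds; +oo if never *)
Definition first_time (s : \bar R) (P : R -> Prop) : \bar R :=
  ereal_inf [set t%:E | t in [set t : R | (s <= t%:E)%E /\ P t]].

Definition hit b (x : R) : \bar R := first_time 0%E (fun t => b t = x).

Definition drop_time b c (s : \bar R) : \bar R :=
  first_time s (fun t => b t - run_sup b (fine s) t = - (2 * c)).

Definition rise_time b c (s : \bar R) : \bar R :=
  first_time s (fun t => b t - run_inf b (fine s) t = 2 * c).

Definition reach_c_first b c : bool := (hit b c < hit b (- c))%E.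

Fixpoint Tseq b c (m : nat) : \bar R :=
  match m with
  | 0%N => if reach_c_first b c then hit b c else hit b (- c)
  | m'.+1 =>
      if reach_c_first b c then
        (if odd m' then rise_time b c (Tseq b c m') else drop_time b c (Tseq b c m'))
      else
        (if odd m' then drop_time b c (Tseq b c m') else rise_time b c (Tseq b c m'))
  end.

(* value of U on (T_m, T_{m+1}] *)
Definition Upiece b c (m : nat) t : R :=
  let s := fine (Tseq b c m) in
  if reach_c_first b c then
    (if odd m then run_inf b s t + c else run_sup b s t - c)
  else
    (if odd m then run_sup b s t - c else run_inf b s t + c).

Definition Upath b c t : R :=
  if (t%:E <= Tseq b c 0)%E then 0
  else Upiece b c
         (xget 0%N [set m : nat | (Tseq b c m < t%:E)%E /\ (t%:E <= Tseq b c m.+1)%E]) t.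

Definition is_solution b c v : Prop :=
  [/\ {within `[0, +oo[, continuous v} /\
      (forall t, 0 <= t -> bounded_variation 0 t v),
      v 0 = 0,
      (forall t, 0 <= t -> b t - c <= v t <= b t + c),
      (forall I : set R, I `<=` `[0, +oo[ -> is_interval I ->
         (forall t, I t -> v t < b t + c) ->
         forall x y, I x -> I y -> x <= y -> v x <= v y) &
      (forall I : set R, I `<=` `[0, +oo[ -> is_interval I ->
         (forall t, I t -> v t > b t - c) ->
         forall x y, I x -> I y -> x <= y -> v y <= v x)].

End Defs.

(* Standard Brownian motion on a probability space, defined through its
   finite-dimensional distributions: measurable coordinates, a.s. continuous
   paths, B_0 = 0 a.s., and for 0 <= t_0 < t_1 < ... < t_n the increments
   B_{t_(k+1)} - B_{t_k} are independent centred Gaussians of variance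
   t_(k+1) - t_k (expressed via the characteristic function, real and
   imaginary parts). *)
Definition brownian_motion {d : measure_display} {Ω : measurableType d}
  {R : realType} (P : probability Ω R) (B : R -> Ω -> R) : Prop :=
  [/\ (forall t, measurable_fun setT (B t)),
      {ae P, forall w, {within `[0, +oo[, continuous (fun t => B t w)}},
      {ae P, forall w, B 0 w = 0} &
      (forall (n : nat) (t u : nat -> R), 0 <= t 0%N ->
         (forall k, (k < n)%N -> t k < t k.+1) ->
         (\int[P]_w (cos (\sum_(k < n) u k * (B (t k.+1) w - B (t k) w)))%:E
            = (expR (- (\sum_(k < n) u k ^+ 2 * (t k.+1 - t k)) / 2))%:E)%E /\
         (\int[P]_w (sin (\sum_(k < n) u k * (B (t k.+1) w - B (t k) w)))%:E = 0)%E)].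

(* Main.v *)
Require Import Defs.
From HB Require Import structures.
From mathcomp Require Import all_boot all_order all_algebra.
From mathcomp Require Import all_classical all_reals all_analysis.
From mathcomp Require Import ring lra.
Set Implicit Arguments. Unset Strict Implicit. Unset Printing Implicit Defensive.
Import Order.TTheory GRing.Theory Num.Theory.
Import numFieldNormedType.Exports.
Local Open Scope classical_set_scope.
Local Open Scope ring_scope.
Section S.
Context {R : realType}.
Definition ctsw (A : set R) (f : R -> R) := forall x, A x -> forall e : R, 0 < e ->
  exists2 d : R, 0 < d & forall y, A y -> `|y - x| < d -> `|f y - f x| < e.

Lemma ctswP A f : {within A, continuous f} <-> ctsw A f.
Proof.
split.
- move=> /subspace_continuousP H x Ax e e0.
  have := H x Ax. move/cvgrPdist_lt => /(_ e e0).
  rewrite /prop_near1 /within /= => /nbhs_ballP [d d0 Hd].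
  exists d => // y Ay yx. rewrite distrC; apply: Hd => //.
  by rewrite /ball /= distrC.
- move=> H; apply/subspace_continuousP => x Ax; apply/cvgrPdist_lt => e e0.
  have [d d0 Hd] := H x Ax e e0.
  rewrite /prop_near1 /within /=; apply/nbhs_ballP; exists d => //= y.
  rewrite /ball /= => xy Ay; rewrite distrC; apply: Hd => //; by rewrite distrC.
Qed.
End S.
Section RS.
Context {R : realType}.
Variable b : R -> R.
Hypothesis hb0 : ctsw `[0, +oo[ b.
Let hb : {within `[0, +oo[, continuous b} := proj2 (ctswP _ _) hb0.

Lemma cont_on s t : 0 <= s -> {within `[s, t], continuous b}.
Proof.
move=> s0; apply: continuous_subspaceW hb => x /=; rewrite !in_itv /= => /andP[sx _].
by rewrite andbT (le_trans s0 sx).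
Qed.

Lemma rs_attain s t : 0 <= s -> s <= t ->
  exists2 u, s <= u <= t & run_sup b s t = b u /\ (forall v, s <= v <= t -> b v <= b u).
Proof.
move=> s0 st; have [u uin H] := EVT_max st (@cont_on s t s0).
move: uin; rewrite in_itv /= => uin; exists u => //; split; last first.
  by move=> v vin; apply: H; rewrite in_itv.
rewrite /run_sup; apply/eqP; rewrite eq_le; apply/andP; split.
  apply: ge_sup; first by exists (b u), u => //=; rewrite in_itv.
  by move=> _ [v vin <-]; apply: H.
apply: ub_le_sup; last by exists u => //=; rewrite in_itv.
by exists (b u) => _ [v vin <-]; apply: H.
Qed.

Lemma rs_ub s t v : 0 <= s -> s <= v <= t -> b v <= run_sup b s t.
Proof.
move=> s0 /andP[sv vt]; have [u uin [-> H]] := rs_attain s0 (le_trans sv vt).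
by apply: H; rewrite sv vt.
Qed.

Lemma rs_le s t M : 0 <= s -> s <= t -> (forall v, s <= v <= t -> b v <= M) -> run_sup b s t <= M.
Proof. by move=> s0 st H; have [u uin [-> _]] := rs_attain s0 st; apply: H. Qed.

Lemma rs_split s x y : 0 <= s -> s <= x -> x <= y ->
  run_sup b s y = Num.max (run_sup b s x) (run_sup b x y).
Proof.
move=> s0 sx xy; have x0 := le_trans s0 sx.
apply/eqP; rewrite eq_le; apply/andP; split.
  have [u /andP[su uy] [-> _]] := rs_attain s0 (le_trans sx xy).
  rewrite le_max; have [ux|xu] := leP u x.
    by apply/orP; left; apply: rs_ub => //; rewrite su ux.
  by apply/orP; right; apply: rs_ub => //; rewrite (ltW xu) uy.
rewrite ge_max; apply/andP; split; apply: rs_le => //; try lra.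
  by move=> v /andP[sv vx]; apply: rs_ub => //; rewrite sv (le_trans vx xy).
by move=> v /andP[xv vy]; apply: rs_ub => //; rewrite vy (le_trans sx xv).
Qed.

Lemma rs_xx s : 0 <= s -> run_sup b s s = b s.
Proof. by move=> s0; have [u /andP[su us] [-> _]] := rs_attain s0 (lexx s); have -> : u = s by apply/eqP; rewrite eq_le us su. Qed.

End RS.
Section RS2.
Context {R : realType}.

Lemma maxr_cases (a c : R) : (Num.max a c = a /\ c <= a) \/ (Num.max a c = c /\ a <= c).
Proof. by case: (leP a c) => h; [right|left]; split => //; rewrite ltW. Qed.

Lemma absP (a d : R) : `|a| < d -> - d < a /\ a < d.
Proof. by rewrite ltr_norml => /andP. Qed.

Lemma absI (a d : R) : - d < a -> a < d -> `|a| < d.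
Proof. by move=> h1 h2; rewrite ltr_norml h1 h2. Qed.

Lemma in0P (x : R) : `[0, +oo[%classic x <-> 0 <= x.
Proof. by rewrite /= in_itv /= andbT. Qed.

Lemma insP (s x : R) : `[s, +oo[%classic x <-> s <= x.
Proof. by rewrite /= in_itv /= andbT. Qed.

Variable b : R -> R.
Hypothesis hb0 : ctsw `[0, +oo[ b.

Lemma bnear x e : 0 <= x -> 0 < e -> exists2 d, 0 < d &
  forall v, 0 <= v -> - d < v - x -> v - x < d -> b x - e < b v /\ b v < b x + e.
Proof.
move=> x0 e0; have [d d0 Hd] := hb0 (proj2 (in0P x) x0) e0.
exists d => // v v0 h1 h2.
have := Hd v (proj2 (in0P v) v0) (absI h1 h2) => /absP [h3 h4]; split; lra.
Qed.

Lemma rs_cont s : 0 <= s -> ctsw `[s, +oo[ (run_sup b s).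
Proof.
move=> s0 x /insP sx e e0.
have x0 : 0 <= x by lra.
have e4 : 0 < e / 4 by lra.
have [d d0 Hd] := bnear x0 e4.
exists d => // y /insP sy /absP [yx1 yx2].
have y0 : 0 <= y by lra.
case: (leP x y) => xy.
- rewrite (rs_split hb0 s0 sx xy).
  have h1 : run_sup b x y <= b x + e / 4.
    apply: rs_le => // v /andP [xv vy].
    have [_ ] := Hd v ltac:(lra) ltac:(lra) ltac:(lra); lra.
  have h2 : b x <= run_sup b s x by apply: rs_ub => //; rewrite sx lexx.
  apply: absI; case: (maxr_cases (run_sup b s x) (run_sup b x y)) => [][-> h]; lra.
- have yx := ltW xy.
  rewrite (rs_split hb0 s0 sy yx).
  have h1 : run_sup b y x <= b x + e / 4.
    apply: rs_le => // v /andP [xv vy].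
    have [_ ] := Hd v ltac:(lra) ltac:(lra) ltac:(lra); lra.
  have h2 : b y <= run_sup b s y by apply: rs_ub => //; rewrite sy lexx.
  have [h3 _] := Hd y y0 ltac:(lra) ltac:(lra).
  apply: absI; case: (maxr_cases (run_sup b s y) (run_sup b y x)) => [][-> h]; lra.
Qed.

End RS2.
Section RS3.
Context {R : realType}.

Lemma ctswN (A : set R) f : ctsw A f -> ctsw A (fun t => - f t).
Proof.
move=> H x Ax e e0; have [d d0 Hd] := H x Ax e e0; exists d => // y Ay yx.
by rewrite -opprD normrN; apply: Hd.
Qed.

Lemma ctswB (A : set R) f g : ctsw A f -> ctsw A g -> ctsw A (fun t => f t - g t).
Proof.
move=> Hf Hg x Ax e e0.
have e2 : 0 < e / 2 by lra.
have [d1 d10 H1] := Hf x Ax _ e2; have [d2 d20 H2] := Hg x Ax _ e2.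
exists (Num.min d1 d2); first by rewrite lt_min d10 d20.
move=> y Ay; rewrite lt_min => /andP[y1 y2].
have := H1 y Ay y1; have := H2 y Ay y2 => /absP[h1 h2] /absP[h3 h4].
apply: absI; lra.
Qed.

Lemma ctswS (A B : set R) f : A `<=` B -> ctsw B f -> ctsw A f.
Proof.
move=> AB H x Ax e e0; have [d d0 Hd] := H x (AB x Ax) e e0.
by exists d => // y Ay; apply: Hd; apply: AB.
Qed.

Lemma ri_rs (b : R -> R) s t : run_inf b s t = - run_sup (fun u => - b u) s t.
Proof. by rewrite /run_inf /inf /run_sup image_comp. Qed.

Variable b : R -> R.
Hypothesis hb0 : ctsw `[0, +oo[ b.
Let hbN : ctsw `[0, +oo[ (fun u => - b u) := ctswN hb0.

Lemma ri_lb s t v : 0 <= s -> s <= v <= t -> run_inf b s t <= b v.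
Proof. by move=> s0 h; rewrite ri_rs lerNl; apply: (rs_ub hbN). Qed.

Lemma ri_ge s t M : 0 <= s -> s <= t -> (forall v, s <= v <= t -> M <= b v) -> M <= run_inf b s t.
Proof. by move=> s0 st H; rewrite ri_rs lerNr; apply: (rs_le hbN) => // v /H; rewrite lerN2. Qed.

Lemma ri_split s x y : 0 <= s -> s <= x -> x <= y ->
  run_inf b s y = Num.min (run_inf b s x) (run_inf b x y).
Proof.
move=> s0 sx xy; rewrite !ri_rs (rs_split hbN s0 sx xy).
case: (maxr_cases (run_sup (fun u => - b u) s x) (run_sup (fun u => - b u) x y)) => [][-> h].
  by rewrite min_l // lerN2.
by rewrite min_r // lerN2.
Qed.

Lemma ri_xx s : 0 <= s -> run_inf b s s = b s.
Proof. by move=> s0; rewrite ri_rs rs_xx // opprK. Qed.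

Lemma ri_attain s t : 0 <= s -> s <= t ->
  exists2 u, s <= u <= t & run_inf b s t = b u.
Proof.
move=> s0 st; have [u uin [E _]] := rs_attain hbN s0 st.
by exists u => //; rewrite ri_rs E opprK.
Qed.

Lemma ri_cont s : 0 <= s -> ctsw `[s, +oo[ (run_inf b s).
Proof.
move=> s0; have -> : run_inf b s = fun t => - run_sup (fun u => - b u) s t.
  by apply/funext => t; rewrite ri_rs.
by apply: ctswN; apply: rs_cont.
Qed.

Lemma rs_const s x y : 0 <= s -> s <= x -> x <= y ->
  (forall t, x <= t <= y -> b t < run_sup b s t) -> run_sup b s y = run_sup b s x.
Proof.
move=> s0 sx xy H.
have x0 : 0 <= x by lra.
rewrite (rs_split hb0 s0 sx xy).
case: (maxr_cases (run_sup b s x) (run_sup b x y)) => [][-> h] //.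
have [u /andP[xu uy] [Eu _]] := rs_attain hb0 x0 xy.
have su : s <= x <= u by rewrite sx xu.
have Hu := H u ltac:(rewrite xu uy //).
move: Hu; rewrite (rs_split hb0 s0 sx xu).
have h1 : run_sup b x u <= b u.
  by rewrite -Eu; apply: rs_le => // v /andP[xv vu]; apply: rs_ub => //; rewrite xv (le_trans vu uy).
have h2 : b u <= run_sup b x u by apply: rs_ub => //; rewrite xu lexx.
case: (maxr_cases (run_sup b s x) (run_sup b x u)) => [][-> h'] Hu; apply/eqP; rewrite eq_le; apply/andP; split; lra.
Qed.

End RS3.
Section RS3b.
Context {R : realType}.
Variable b : R -> R.
Hypothesis hb0 : ctsw `[0, +oo[ b.
Let hbN : ctsw `[0, +oo[ (fun u => - b u) := ctswN hb0.
Lemma ri_const s x y : 0 <= s -> s <= x -> x <= y ->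
  (forall t, x <= t <= y -> run_inf b s t < b t) -> run_inf b s y = run_inf b s x.
Proof.
move=> s0 sx xy H; rewrite !ri_rs; congr (- _).
apply: (@rs_const _ (fun u => - b u) hbN s x y s0 sx xy) => t /H.
by rewrite ri_rs ltrNl.
Qed.

End RS3b.
Section FT.
Context {R : realType}.

Lemma ft_spec (s tau : R) (P : R -> Prop) : first_time s%:E P = tau%:E ->
  [/\ s <= tau, (forall t, s <= t -> P t -> tau <= t) &
     (forall e, 0 < e -> exists t, [/\ s <= t, P t & t < tau + e])].
Proof.
move=> E; split.
- rewrite -lee_fin -E /first_time; apply: le_ereal_inf_tmp => _ [t [st _] <-] //.
- move=> t st Pt; rewrite -lee_fin -E /first_time; apply: ereal_inf_lbound; exists t => //.
- move=> e e0.
  have H : (first_time s%:E P < (tau + e)%:E)%E.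
    by rewrite E lte_fin; lra.
  have [_ [t [st Pt] <-]] := ereal_inf_lt H; rewrite lte_fin => te.
  by exists t; split => //; rewrite -lee_fin.
Qed.

Lemma ft_attain s tau (g : R -> R) v : ctsw `[s, +oo[ g ->
  first_time s%:E (fun t => g t = v) = tau%:E -> g tau = v.
Proof.
move=> hg /ft_spec [st lb adh].
have [//|ne] := eqVneq (g tau) v.
have e0 : 0 < `|g tau - v| by rewrite normr_gt0 subr_eq0.
have [d d0 Hd] := hg tau (proj2 (insP _ _) st) _ e0.
have [t [st' Pt td]] := adh d d0.
have taut := lb t st' Pt.
have h1 : - d < t - tau by lra.
have h2 : t - tau < d by lra.
have := Hd t (proj2 (insP _ _) st') (absI h1 h2).
by rewrite Pt distrC ltxx.
Qed.

Lemma ft_lt s tau (g : R -> R) v : ctsw `[s, +oo[ g ->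
  first_time s%:E (fun t => g t = v) = tau%:E -> g s <> v -> s < tau.
Proof.
move=> hg E ne; have ga := ft_attain hg E; have [st _ _] := ft_spec E.
rewrite lt_neqAle st andbT; apply/eqP => est; apply: ne; by rewrite est.
Qed.

Lemma cont_itv s t (g : R -> R) : ctsw `[s, +oo[ g -> {within `[s, t], continuous g}.
Proof.
move=> hg; apply/ctswP; apply: ctswS hg => x /=; rewrite !in_itv /= => /andP[sx _].
by rewrite sx.
Qed.

Lemma ft_ge s tau (g : R -> R) v : ctsw `[s, +oo[ g ->
  first_time s%:E (fun t => g t = v) = tau%:E -> v < g s ->
  forall t, s <= t <= tau -> v <= g t.
Proof.
move=> hg E vs t /andP[st ttau]; have [_ lb _] := ft_spec E.
rewrite leNgt; apply/negP => gt.
have [u uin gu] : exists2 u, u \in `[s, t] & g u = v.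
  apply: IVT => //; first exact: cont_itv.
  by rewrite min_r ?max_l ?(ltW gt) ?(ltW vs) //; apply: ltW; apply: lt_trans gt vs.
move: uin; rewrite in_itv /= => /andP[su ut].
have := lb u su gu => tu.
have ut' : u = t by apply/eqP; rewrite eq_le ut (le_trans ttau tu).
by move: gt; rewrite -ut' gu ltxx.
Qed.

Lemma ft_le s tau (g : R -> R) v : ctsw `[s, +oo[ g ->
  first_time s%:E (fun t => g t = v) = tau%:E -> g s < v ->
  forall t, s <= t <= tau -> g t <= v.
Proof.
move=> hg E vs t /andP[st ttau]; have [_ lb _] := ft_spec E.
rewrite leNgt; apply/negP => gt.
have [u uin gu] : exists2 u, u \in `[s, t] & g u = v.
  apply: IVT => //; first exact: cont_itv.
  by rewrite min_l ?max_r ?(ltW gt) ?(ltW vs) //; apply: ltW; apply: lt_trans vs gt.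
move: uin; rewrite in_itv /= => /andP[su ut].
have := lb u su gu => tu.
have ut' : u = t by apply/eqP; rewrite eq_le ut (le_trans ttau tu).
by move: gt; rewrite -ut' gu ltxx.
Qed.

End FT.
Section FTge.
Context {R : realType}.
Lemma ft_ge_s (s : \bar R) P : (s <= first_time s P)%E.
Proof. by apply: le_ereal_inf_tmp => _ [t [st _] <-]. Qed.

Lemma hitN (b : R -> R) x : hit (fun t => - b t) x = hit b (- x).
Proof.
rewrite /hit; congr first_time; apply/funext => t; apply/propext; split => h; lra.
Qed.

Lemma hit_spec (b : R -> R) x y tau : ctsw `[0, +oo[ b -> b 0 = 0 -> y < 0 -> 0 < x ->
  hit b x = tau%:E -> (hit b x <= hit b y)%E ->
  [/\ 0 <= tau, b tau = x & forall t, 0 <= t <= tau -> y <= b t <= x].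
Proof.
move=> hb b0 y0 x0 E Exy.
have [t0 lb _] := ft_spec E.
have ga : b tau = x by apply: (ft_attain hb E).
split => // t /andP[t0' ttau]; apply/andP; split; last first.
  by apply: (ft_le hb E) => //; [rewrite b0 | rewrite t0' ttau].
rewrite leNgt; apply/negP => bty.
have [u uin gu] : exists2 u, u \in `[0, t] & b u = y.
  apply: IVT => //; first exact: cont_itv.
  rewrite min_r ?max_l ?b0 ?(ltW bty) ?(ltW y0) //; apply: ltW; exact: lt_trans bty y0.
move: uin; rewrite in_itv /= => /andP[u0 ut].
have hu : (hit b y <= u%:E)%E.
  by apply: ereal_inf_lbound; exists u => //; rewrite /= lee_fin; split.
have : (tau%:E <= u%:E)%E by rewrite -E (le_trans Exy hu).
rewrite lee_fin => tu.
have ut' : u = tau by apply/eqP; rewrite eq_le tu (le_trans ut ttau).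
move: gu; rewrite ut' ga => xy; lra.
Qed.
End FTge.

Ltac lraT := repeat match goal with
  | H : context [EFin _] |- _ => clear H
  | H : context [EPInf] |- _ => clear H
  | H : context [ENInf] |- _ => clear H
  end; repeat match goal with H : ?T |- _ => match type of T with Prop => revert H end end;
  repeat (let h := fresh "hh" in intro h); lra.
Section Tseq.
Context {R : realType}.
Variables (b : R -> R) (c : R).
Hypothesis hc : 0 < c.
Hypothesis hb0 : ctsw `[0, +oo[ b.
Hypothesis b0 : b 0 = 0.
Hypothesis hT : forall m, (Tseq b c m < +oo)%E.

Definition tau m := fine (Tseq b c m).
Definition up m : bool := reach_c_first b c == ~~ odd m.

Lemma Tseq_S m : Tseq b c m.+1 =
  if up m then drop_time b c (Tseq b c m) else rise_time b c (Tseq b c m).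
Proof. by rewrite /up /=; case: (reach_c_first b c); case: (odd m). Qed.

Lemma up_S m : up m.+1 = ~~ up m.
Proof. by rewrite /up /=; case: (reach_c_first b c); case: (odd m). Qed.

Lemma up_0 : up 0 = reach_c_first b c.
Proof. by rewrite /up /=; case: (reach_c_first b c). Qed.

Lemma Tseq_ge0 m : (0 <= Tseq b c m)%E.
Proof.
elim: m => [|m IH].
  by rewrite /=; case: ifP => _; exact: ft_ge_s.
rewrite Tseq_S; case: ifP => _; apply: le_trans IH _; exact: ft_ge_s.
Qed.

Lemma T_fin m : Tseq b c m = (tau m)%:E.
Proof.
rewrite /tau; have := hT m; have := Tseq_ge0 m.
by case: (Tseq b c m).
Qed.

Lemma tau0_ge0 : 0 <= tau 0.
Proof. by have := Tseq_ge0 0; rewrite T_fin lee_fin. Qed.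

Lemma T0_spec : [/\ 0 <= tau 0, b (tau 0) = (if reach_c_first b c then c else - c)
   & forall t, 0 <= t <= tau 0 -> - c <= b t <= c].
Proof.
have E : (if reach_c_first b c then hit b c else hit b (- c)) = (tau 0)%:E := T_fin 0.
have c0 : - c < 0 by rewrite oppr_lt0.
case R0: (reach_c_first b c) E => E.
- have Exy : (hit b c <= hit b (- c))%E by apply: ltW; exact: R0.
  by have [h1 h2 h3] := hit_spec hb0 b0 c0 hc E Exy; split.
- have hbN : ctsw `[0, +oo[ (fun t => - b t) := ctswN hb0.
  have bN0 : - b 0 = 0 by rewrite b0 oppr0.
  have E' : hit (fun t => - b t) c = (tau 0)%:E by rewrite hitN.
  have Exy : (hit (fun t => (- b t)%R) c <= hit (fun t => (- b t)%R) (- c)%R)%E.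
    by rewrite !hitN opprK leNgt; move: R0; rewrite /reach_c_first => ->.
  have [h1 h2 h3] := hit_spec hbN bN0 c0 hc E' Exy; clear E E' Exy hT; split => //; first lraT.
  by move=> t /h3 /andP[h4 h5]; apply/andP; split; lraT.
Qed.

Definition gS m := fun t => b t - run_sup b (tau m) t.
Definition gI m := fun t => b t - run_inf b (tau m) t.

Lemma tau_ge0 m : 0 <= tau m.
Proof. by have := Tseq_ge0 m; rewrite T_fin lee_fin. Qed.

Lemma gS_cont m : ctsw `[tau m, +oo[ (gS m).
Proof.
apply: ctswB; last exact: rs_cont (tau_ge0 m).
apply: ctswS hb0 => x /insP h; apply/in0P; have := tau_ge0 m; lraT.
Qed.

Lemma gI_cont m : ctsw `[tau m, +oo[ (gI m).
Proof.
apply: ctswB; last exact: ri_cont (tau_ge0 m).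
apply: ctswS hb0 => x /insP h; apply/in0P; have := tau_ge0 m; lraT.
Qed.

Lemma piece_up m : up m ->
  [/\ tau m < tau m.+1, gS m (tau m.+1) = - (2 * c)
    & forall t, tau m <= t <= tau m.+1 -> - (2 * c) <= gS m t].
Proof.
move=> um.
have E : first_time (tau m)%:E (fun t => gS m t = - (2 * c)) = (tau m.+1)%:E.
  by rewrite -[(tau m.+1)%:E]T_fin Tseq_S um /drop_time T_fin.
have gs : gS m (tau m) = 0 by rewrite /gS rs_xx ?subrr //; exact: tau_ge0.
split.
- apply: (ft_lt (@gS_cont m) E); rewrite gs => hh; lraT.
- exact: (ft_attain (@gS_cont m) E).
- apply: (ft_ge (@gS_cont m) E); rewrite gs; lraT.
Qed.

Lemma piece_dn m : ~~ up m ->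
  [/\ tau m < tau m.+1, gI m (tau m.+1) = 2 * c
    & forall t, tau m <= t <= tau m.+1 -> gI m t <= 2 * c].
Proof.
move=> um.
have E : first_time (tau m)%:E (fun t => gI m t = 2 * c) = (tau m.+1)%:E.
  by rewrite -[(tau m.+1)%:E]T_fin Tseq_S (negbTE um) /rise_time T_fin.
have gs : gI m (tau m) = 0 by rewrite /gI ri_xx ?subrr //; exact: tau_ge0.
split.
- apply: (ft_lt (@gI_cont m) E); rewrite gs => hh; lraT.
- exact: (ft_attain (@gI_cont m) E).
- apply: (ft_le (@gI_cont m) E); rewrite gs; lraT.
Qed.

Lemma tau_lt m : tau m < tau m.+1.
Proof. by case: (boolP (up m)) => h; [case: (piece_up h)|case: (piece_dn h)]. Qed.

Lemma tau_le i j : (i <= j)%N -> tau i <= tau j.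
Proof.
move=> /subnK <-; elim: (j - i)%N => [|k IH]; first by rewrite add0n.
by rewrite addSn; apply: le_trans IH (ltW (tau_lt _)).
Qed.

End Tseq.
Section U.
Context {R : realType}.
Variables (b : R -> R) (c : R).
Hypothesis hc : 0 < c.
Hypothesis hb0 : ctsw `[0, +oo[ b.
Hypothesis b0 : b 0 = 0.
Hypothesis hT : forall m, (Tseq b c m < +oo)%E.

Local Notation tau := (tau b c).
Local Notation up := (up b c).

Lemma Upiece_E m t : Upiece b c m t =
  if up m then run_sup b (tau m) t - c else run_inf b (tau m) t + c.
Proof. by rewrite /Upiece /up /tau; case: (reach_c_first b c); case: (odd m). Qed.

Lemma tau_unbounded y : exists m, y <= tau m.
Proof.
have [//|H] := pselect (exists m, y <= tau m).
have Hy : forall m, tau m < y.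
  by move=> m; rewrite ltNge; apply/negP => h; apply: H; exists m.
pose E := [set tau m | m in [set: nat]].
have hs : has_sup E.
  split; first by exists (tau 0), 0%N.
  by exists y => _ [m _ <-]; apply: ltW.
have ub : forall m, tau m <= sup E by move=> m; apply: ub_le_sup (proj2 hs) _ _; exists m.
have L0 : 0 <= sup E by apply: le_trans (tau_ge0 hT 0) (ub 0%N).
have [d d0 Hd] := bnear hb0 L0 hc.
have [_ [m _ <-] md] := sup_adherent d0 hs.
have t0 := tau_ge0 hT m.
have tl := tau_lt hc hb0 b0 hT m.
have u1 := ub m.+1.
case: (boolP (up m)) => um.
- have [_ ge _] := piece_up hc hb0 b0 hT um.
  have [u /andP[su ue] [Eu _]] := rs_attain hb0 t0 (ltW tl).
  move: ge; rewrite /gS Eu => ge.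
  have [_ h1] := Hd u ltac:(lraT) ltac:(lraT) ltac:(lraT).
  have [h2 _] := Hd (tau m.+1) ltac:(lraT) ltac:(lraT) ltac:(lraT).
  lraT.
- have [_ ge _] := piece_dn hc hb0 b0 hT um.
  have [u /andP[su ue] Eu] := ri_attain hb0 t0 (ltW tl).
  move: ge; rewrite /gI Eu => ge.
  have [h1 _] := Hd u ltac:(lraT) ltac:(lraT) ltac:(lraT).
  have [_ h2] := Hd (tau m.+1) ltac:(lraT) ltac:(lraT) ltac:(lraT).
  lraT.
Qed.

Lemma tau_lt' m : tau m < tau m.+1. Proof. exact: tau_lt hc hb0 b0 hT m. Qed.
Lemma tau_le' i j : (i <= j)%N -> tau i <= tau j. Proof. by move=> h; have := tau_le hc hb0 b0 hT h. Qed.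

Lemma U0 t : t <= tau 0 -> Upath b c t = 0.
Proof. by move=> h; rewrite /Upath (T_fin hT) lee_fin h. Qed.

Lemma U_open m t : tau m < t <= tau m.+1 -> Upath b c t = Upiece b c m t.
Proof.
move=> /andP[h1 h2].
have t0 : tau 0 < t by apply: le_lt_trans h1; apply: tau_le'.
rewrite /Upath ifF; last by rewrite (T_fin hT) lee_fin leNgt t0.
congr Upiece; apply: xget_unique.
  by split; rewrite (T_fin hT) ?lte_fin ?lee_fin.
move=> m' []; rewrite !(T_fin hT) lte_fin lee_fin => h3 h4.
case: (ltngtP m' m) => // hm.
- exfalso; have := tau_le' hm; clear hm; lraT.
- exfalso; have := tau_le' hm; clear hm; lraT.
Qed.

Lemma junction0 : Upiece b c 0 (tau 0) = 0.
Proof.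
have [t0 bt _] := T0_spec hc hb0 b0 hT.
rewrite Upiece_E up_0; move: bt.
case: (reach_c_first b c) => bt.
  by rewrite rs_xx // bt subrr.
by rewrite ri_xx // bt addNr.
Qed.

Lemma junction m : Upiece b c m.+1 (tau m.+1) = Upiece b c m (tau m.+1).
Proof.
have t0 := tau_ge0 hT m.+1.
rewrite !Upiece_E up_S; case: (boolP (up m)) => um /=.
- have [_ ge _] := piece_up hc hb0 b0 hT um.
  by rewrite ri_xx //; move: ge; rewrite /gS => ge; lraT.
- have [_ ge _] := piece_dn hc hb0 b0 hT um.
  by rewrite rs_xx //; move: ge; rewrite /gI => ge; lraT.
Qed.

Lemma U_piece m t : tau m <= t <= tau m.+1 -> Upath b c t = Upiece b c m t.
Proof.
move=> /andP[h1 h2]; case: (ltP (tau m) t) => h3.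
  by apply: U_open; rewrite h3 h2.
have et : t = tau m by apply/eqP; rewrite eq_le h1 h3.
rewrite et; case: m {h1 h2 h3 et} => [|k].
  by rewrite U0 // junction0.
by rewrite junction; apply: U_open; rewrite tau_lt' lexx.
Qed.

End U.
Section Glue.
Context {R : realType}.
Lemma glue (tau : nat -> R) (Q : R -> R -> Prop) :
  (forall m, tau m <= tau m.+1) -> (forall y, exists m, y <= tau m) ->
  (forall x z y, 0 <= x -> x <= z -> z <= y -> Q x z -> Q z y -> Q x y) ->
  (forall x y, 0 <= x -> x <= y -> y <= tau 0%N -> Q x y) ->
  (forall m x y, tau m <= x -> x <= y -> y <= tau m.+1 -> Q x y) ->
  forall x y, 0 <= x -> x <= y -> Q x y.
Proof.
move=> mono unb tr p0 pS.
have key : forall n x y, 0 <= x -> x <= y -> y <= tau n -> Q x y.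
  elim=> [|n IH] x y x0 xy yn; first exact: p0.
  case: (leP y (tau n)) => yn'; first exact: IH.
  case: (leP (tau n) x) => xn; first exact: (pS n).
  apply: (tr x (tau n) y) => //; try exact: ltW.
    by apply: IH => //; exact: ltW.
  by apply: (pS n) => //; exact: ltW.
move=> x y x0 xy; have [m ym] := unb y; exact: (key m).
Qed.
End Glue.

Lemma minr_cases {R : realType} (a c : R) : (Num.min a c = a /\ a <= c) \/ (Num.min a c = c /\ c <= a).
Proof. by case: (leP a c) => h; [left|right]; split => //; rewrite ltW. Qed.

Section Pieces.
Context {R : realType}.
Variables (b : R -> R) (c : R).
Hypothesis hc : 0 < c.
Hypothesis hb0 : ctsw `[0, +oo[ b.
Hypothesis b0 : b 0 = 0.
Hypothesis hT : forall m, (Tseq b c m < +oo)%E.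

Local Notation tau := (tau b c).
Local Notation up := (up b c).
Local Notation f := (Upiece b c).

Lemma pc_bounds m t : tau m <= t <= tau m.+1 -> b t - c <= f m t <= b t + c.
Proof.
move=> ht; have t0 := tau_ge0 hT m; rewrite Upiece_E.
case: (boolP (up m)) => um.
- have [_ _ H] := piece_up hc hb0 b0 hT um.
  have := H t ht; rewrite /gS => h1.
  have h2 : b t <= run_sup b (tau m) t.
    by apply: rs_ub => //; case/andP: ht => -> _; rewrite lexx.
  by apply/andP; split; lraT.
- have [_ _ H] := piece_dn hc hb0 b0 hT um.
  have := H t ht; rewrite /gI => h1.
  have h2 : run_inf b (tau m) t <= b t.
    by apply: ri_lb => //; case/andP: ht => -> _; rewrite lexx.
  by apply/andP; split; lraT.
Qed.

Lemma pc_mono m x y : tau m <= x -> x <= y -> y <= tau m.+1 ->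
  (up m -> f m x <= f m y) /\ (~~ up m -> f m y <= f m x).
Proof.
move=> sx xy ye; have t0 := tau_ge0 hT m; rewrite !Upiece_E.
split => um; rewrite ?um ?(negbTE um).
- rewrite (rs_split hb0 t0 sx xy) lerD2r.
  by case: (maxr_cases (run_sup b (tau m) x) (run_sup b x y)) => [][-> h].
- rewrite (ri_split hb0 t0 sx xy) lerD2r.
  case: (minr_cases (run_inf b (tau m) x) (run_inf b x y)) => [][-> h] //.
Qed.

Lemma pc_up m x y : tau m <= x -> x <= y -> y <= tau m.+1 ->
  f m y <= f m x \/ f m y <= run_sup b x y - c.
Proof.
move=> sx xy ye; have t0 := tau_ge0 hT m.
case: (boolP (up m)) => um; last by left; case: (pc_mono sx xy ye) => _ /(_ um).
rewrite !Upiece_E um (rs_split hb0 t0 sx xy).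
by case: (maxr_cases (run_sup b (tau m) x) (run_sup b x y)) => [][-> h]; [left|right].
Qed.

Lemma pc_dn m x y : tau m <= x -> x <= y -> y <= tau m.+1 ->
  f m x <= f m y \/ run_inf b x y + c <= f m y.
Proof.
move=> sx xy ye; have t0 := tau_ge0 hT m.
case: (boolP (up m)) => um; first by left; case: (pc_mono sx xy ye) => /(_ um).
rewrite !Upiece_E (negbTE um) (ri_split hb0 t0 sx xy).
by case: (minr_cases (run_inf b (tau m) x) (run_inf b x y)) => [][-> h]; [left|right].
Qed.

Lemma pc_c m x y : tau m <= x -> x <= y -> y <= tau m.+1 ->
  (forall t, x <= t <= y -> f m t < b t + c) -> f m x <= f m y.
Proof.
move=> sx xy ye H; have t0 := tau_ge0 hT m.
case: (boolP (up m)) => um; first by case: (pc_mono sx xy ye) => /(_ um).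
have E : run_inf b (tau m) y = run_inf b (tau m) x.
  apply: (ri_const hb0 t0 sx xy) => t /H; rewrite Upiece_E (negbTE um) => h; lraT.
by rewrite !Upiece_E (negbTE um) E.
Qed.

Lemma pc_d m x y : tau m <= x -> x <= y -> y <= tau m.+1 ->
  (forall t, x <= t <= y -> b t - c < f m t) -> f m y <= f m x.
Proof.
move=> sx xy ye H; have t0 := tau_ge0 hT m.
case: (boolP (up m)) => um; last by case: (pc_mono sx xy ye) => _ /(_ um).
have E : run_sup b (tau m) y = run_sup b (tau m) x.
  apply: (rs_const hb0 t0 sx xy) => t /H; rewrite Upiece_E um => h; lraT.
by rewrite !Upiece_E um E.
Qed.

End Pieces.
Section Global.
Context {R : realType}.
Variables (b : R -> R) (c : R).
Hypothesis hc : 0 < c.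
Hypothesis hb0 : ctsw `[0, +oo[ b.
Hypothesis b0 : b 0 = 0.
Hypothesis hT : forall m, (Tseq b c m < +oo)%E.

Local Notation tau := (tau b c).
Local Notation up := (up b c).
Local Notation f := (Upiece b c).
Local Notation U := (Upath b c).

Lemma Ueq m t : tau m <= t -> t <= tau m.+1 -> U t = f m t.
Proof. by move=> h1 h2; apply: (U_piece hc hb0 b0 hT); rewrite h1 h2. Qed.

Lemma gl (Q : R -> R -> Prop) : (forall x z y, 0 <= x -> x <= z -> z <= y -> Q x z -> Q z y -> Q x y) ->
  (forall x y, 0 <= x -> x <= y -> y <= tau 0%N -> Q x y) ->
  (forall m x y, tau m <= x -> x <= y -> y <= tau m.+1 -> Q x y) ->
  forall x y, 0 <= x -> x <= y -> Q x y.
Proof.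
move=> tr p0 pS; refine (@glue _ tau Q _ _ tr p0 pS).
  by move=> m; apply: ltW; apply: (tau_lt' hc hb0 b0 hT).
exact: (tau_unbounded hc hb0 b0 hT).
Qed.

Lemma G_b t : 0 <= t -> b t - c <= U t <= b t + c.
Proof.
move=> t0; apply: (@gl (fun x y => b y - c <= U y <= b y + c) _ _ _ t t) => //.
- move=> x y x0 xy ytau; rewrite U0 //.
  have [_ _ H] := T0_spec hc hb0 b0 hT.
  have hy : 0 <= y <= tau 0 by apply/andP; split; lraT.
  have /andP[h1 h2] := H y hy.
  apply/andP; split; lraT.
- move=> m x y h1 h2 h3; rewrite (Ueq (le_trans h1 h2) h3).
  apply: (pc_bounds hc hb0 b0 hT); rewrite h3 andbT; exact: le_trans h1 h2.
Qed.

Lemma G_up x y : 0 <= x -> x <= y -> U y <= U x \/ U y <= run_sup b x y - c.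
Proof.
apply: (@gl (fun x y => U y <= U x \/ U y <= run_sup b x y - c)).
- move=> {}x z {}y x0 xz zy H1 H2.
  rewrite (rs_split hb0 x0 xz zy).
  case: (maxr_cases (run_sup b x z) (run_sup b z y)) => [][-> h];
  case: H1 => H1; case: H2 => H2; by [left; lraT|right; lraT].
- by move=> {}x {}y _ xy ytau; rewrite (U0 hT ytau) (U0 hT (le_trans xy ytau)); left.
- move=> m {}x {}y h1 h2 h3; rewrite (Ueq h1 (le_trans h2 h3)) (Ueq (le_trans h1 h2) h3).
  exact: (pc_up hb0 hT).
Qed.

Lemma G_dn x y : 0 <= x -> x <= y -> U x <= U y \/ run_inf b x y + c <= U y.
Proof.
apply: (@gl (fun x y => U x <= U y \/ run_inf b x y + c <= U y)).
- move=> {}x z {}y x0 xz zy H1 H2.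
  rewrite (ri_split hb0 x0 xz zy).
  case: (minr_cases (run_inf b x z) (run_inf b z y)) => [][-> h];
  case: H1 => H1; case: H2 => H2; by [left; lraT|right; lraT].
- by move=> {}x {}y _ xy ytau; rewrite (U0 hT ytau) (U0 hT (le_trans xy ytau)); left.
- move=> m {}x {}y h1 h2 h3; rewrite (Ueq h1 (le_trans h2 h3)) (Ueq (le_trans h1 h2) h3).
  exact: (pc_dn hb0 hT).
Qed.

End Global.
Section Global2.
Context {R : realType}.
Variables (b : R -> R) (c : R).
Hypothesis hc : 0 < c.
Hypothesis hb0 : ctsw `[0, +oo[ b.
Hypothesis b0 : b 0 = 0.
Hypothesis hT : forall m, (Tseq b c m < +oo)%E.

Local Notation tau := (tau b c).
Local Notation up := (up b c).
Local Notation f := (Upiece b c).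
Local Notation U := (Upath b c).

Lemma G_c (I : set R) : I `<=` `[0, +oo[ -> is_interval I ->
  (forall t, I t -> U t < b t + c) -> forall x y, I x -> I y -> x <= y -> U x <= U y.
Proof.
move=> I0 iI H x y Ix Iy xy.
have x0 : 0 <= x by apply/in0P; apply: I0.
apply: (@gl _ _ _ hc hb0 b0 hT (fun x y => I x -> I y -> U x <= U y) _ _ _ x y x0 xy Ix Iy); clear Ix Iy x0 xy x y.
- move=> x z y _ xz zy H1 H2 Ix Iy.
  have Iz : I z by apply: (iI x y) => //; rewrite xz zy.
  exact: le_trans (H1 Ix Iz) (H2 Iz Iy).
- move=> x y _ xy ytau _ _.
  by rewrite (U0 hT ytau) (U0 hT (le_trans xy ytau)).
- move=> m x y h1 h2 h3 Ix Iy.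
  rewrite (Ueq hc hb0 b0 hT h1 (le_trans h2 h3)) (Ueq hc hb0 b0 hT (le_trans h1 h2) h3).
  apply: (pc_c hc hb0 b0 hT h1 h2 h3) => t /andP[xt ty].
  have It : I t by apply: (iI x y) => //; rewrite xt ty.
  rewrite -(Ueq hc hb0 b0 hT (le_trans h1 xt) (le_trans ty h3)); exact: H.
Qed.

Lemma G_d (I : set R) : I `<=` `[0, +oo[ -> is_interval I ->
  (forall t, I t -> b t - c < U t) -> forall x y, I x -> I y -> x <= y -> U y <= U x.
Proof.
move=> I0 iI H x y Ix Iy xy.
have x0 : 0 <= x by apply/in0P; apply: I0.
apply: (@gl _ _ _ hc hb0 b0 hT (fun x y => I x -> I y -> U y <= U x) _ _ _ x y x0 xy Ix Iy); clear Ix Iy x0 xy x y.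
- move=> x z y _ xz zy H1 H2 Ix Iy.
  have Iz : I z by apply: (iI x y) => //; rewrite xz zy.
  exact: le_trans (H2 Iz Iy) (H1 Ix Iz).
- move=> x y _ xy ytau _ _.
  by rewrite (U0 hT ytau) (U0 hT (le_trans xy ytau)).
- move=> m x y h1 h2 h3 Ix Iy.
  rewrite (Ueq hc hb0 b0 hT h1 (le_trans h2 h3)) (Ueq hc hb0 b0 hT (le_trans h1 h2) h3).
  apply: (pc_d hc hb0 b0 hT h1 h2 h3) => t /andP[xt ty].
  have It : I t by apply: (iI x y) => //; rewrite xt ty.
  rewrite -(Ueq hc hb0 b0 hT (le_trans h1 xt) (le_trans ty h3)); exact: H.
Qed.

Lemma G_bv t : 0 <= t -> bounded_variation 0 t U.
Proof.
move=> t0; apply: (@gl _ _ _ hc hb0 b0 hT (fun x y => bounded_variation x y U)) => //.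
- move=> x z y _ xz zy H1 H2.
  apply/bounded_variationP; first exact: le_trans xz zy.
  rewrite (total_variationD _ xz zy) fin_numD.
  by rewrite (bounded_variationP _ xz).1 // (bounded_variationP _ zy).1.
- move=> x y _ xy ytau; apply: nondecreasing_bounded_variation => u v.
  rewrite !in_itv /= => /andP[xu uy] /andP[xv vy] _.
  by rewrite (U0 hT (le_trans uy ytau)) (U0 hT (le_trans vy ytau)).
- move=> m x y h1 h2 h3.
  have Hm : forall u v, u \in `[x, y] -> v \in `[x, y] -> u <= v ->
      (up m -> U u <= U v) /\ (~~ up m -> U v <= U u).
    move=> u v; rewrite !in_itv /= => /andP[xu uy] /andP[xv vy] uv.
    rewrite (Ueq hc hb0 b0 hT (le_trans h1 xu) (le_trans uy h3)).
    rewrite (Ueq hc hb0 b0 hT (le_trans h1 xv) (le_trans vy h3)).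
    exact: (pc_mono hb0 hT (le_trans h1 xu) uv (le_trans vy h3)).
  case: (boolP (up m)) => um.
    by apply: nondecreasing_bounded_variation => u v hu hv uv; case: (Hm u v hu hv uv) => /(_ um).
  have : bounded_variation x y (\- (\- U)).
    apply: bounded_variationN; apply: nondecreasing_bounded_variation => u v hu hv uv.
    by rewrite lerN2; case: (Hm u v hu hv uv) => _ /(_ um).
  by congr bounded_variation; apply/funext => u /=; rewrite opprK.
Qed.

End Global2.
Section Global3.
Context {R : realType}.
Variables (b : R -> R) (c : R).
Hypothesis hc : 0 < c.
Hypothesis hb0 : ctsw `[0, +oo[ b.
Hypothesis b0 : b 0 = 0.
Hypothesis hT : forall m, (Tseq b c m < +oo)%E.

Local Notation U := (Upath b c).

Lemma G_cont : ctsw `[0, +oo[ U.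
Proof.
move=> x /in0P x0 e e0.
have e4 : 0 < e / 4 by lraT.
have [d d0 Hd] := bnear hb0 x0 e4.
exists d => // y /in0P y0 /absP [yx1 yx2].
have Hb := G_b hc hb0 b0 hT.
case: (leP x y) => xy.
- have hS : run_sup b x y <= b x + e / 4.
    apply: (rs_le hb0 x0 xy) => v /andP[xv vy].
    have v0 : 0 <= v by lraT.
    have h1 : - d < v - x by lraT.
    have h2 : v - x < d by lraT.
    by have [_ ?] := Hd v v0 h1 h2; lraT.
  have hI : b x - e / 4 <= run_inf b x y.
    apply: (ri_ge hb0 x0 xy) => v /andP[xv vy].
    have v0 : 0 <= v by lraT.
    have h1 : - d < v - x by lraT.
    have h2 : v - x < d by lraT.
    by have [? _] := Hd v v0 h1 h2; lraT.
  have /andP[hx1 hx2] := Hb x x0.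
  apply: absI.
    by case: (G_dn hc hb0 b0 hT x0 xy) => h; lraT.
  by case: (G_up hc hb0 b0 hT x0 xy) => h; lraT.
- have yx := ltW xy.
  have hS : run_sup b y x <= b x + e / 4.
    apply: (rs_le hb0 y0 yx) => v /andP[xv vy].
    have v0 : 0 <= v by lraT.
    have h1 : - d < v - x by lraT.
    have h2 : v - x < d by lraT.
    by have [_ ?] := Hd v v0 h1 h2; lraT.
  have hI : b x - e / 4 <= run_inf b y x.
    apply: (ri_ge hb0 y0 yx) => v /andP[xv vy].
    have v0 : 0 <= v by lraT.
    have h1 : - d < v - x by lraT.
    have h2 : v - x < d by lraT.
    by have [? _] := Hd v v0 h1 h2; lraT.
  have hby : b x - e / 4 < b y /\ b y < b x + e / 4 by apply: Hd => //.
  have /andP[hy1 hy2] := Hb y y0.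
  apply: absI.
    by case: (G_up hc hb0 b0 hT y0 yx) => h; lraT.
  by case: (G_dn hc hb0 b0 hT y0 yx) => h; lraT.
Qed.

Lemma U_solution : is_solution b c U.
Proof.
split.
- split; first exact/ctswP/G_cont.
  exact: G_bv hc hb0 b0 hT.
- by apply: (U0 hT); apply: (tau0_ge0 hT).
- exact: G_b hc hb0 b0 hT.
- exact: G_c hc hb0 b0 hT.
- exact: G_d hc hb0 b0 hT.
Qed.

End Global3.
Section Uniq.
Context {R : realType}.

Lemma uniq_le (b : R -> R) c v w : is_solution b c v -> is_solution b c w ->
  forall t, 0 <= t -> v t <= w t.
Proof.
move=> [[cv _] v0 vb vc vd] [[cw _] w0 wb wc wd] t t0.
rewrite leNgt; apply/negP => lt.
pose D := v t - w t.
have D0 : 0 < D by rewrite /D; lra.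
pose A := [set r | 0 <= r <= t /\ v r <= w r].
have A0 : A 0 by split; [rewrite lexx t0|rewrite v0 w0].
have hA : has_sup A.
  split; first by exists 0.
  by exists t => r [/andP[_ ]].
pose s := sup A.
have s0 : 0 <= s by apply: ub_le_sup (proj2 hA) _ A0.
have st : s <= t by apply: ge_sup; [exists 0|move=> r [/andP[_ ]]].
have gc : ctsw `[0, +oo[ (fun r => v r - w r) := ctswB (proj1 (ctswP _ _) cv) (proj1 (ctswP _ _) cw).
have D2 : 0 < D / 2 by lra.
have [d d0 Hd] := gc s (proj2 (in0P s) s0) _ D2.
have [a Aa sa] := sup_adherent d0 hA; rewrite -/s in sa.
have aus : a <= s by apply: ub_le_sup (proj2 hA) _ Aa.
case: Aa => /andP[a0 at'] vwa.
have ha : - (D / 2) < v a - w a - (v s - w s).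
  have h1 : - d < a - s by lra.
  have h2 : a - s < d by lra.
  by have /absP[? _] := Hd a (proj2 (in0P a) a0) (absI h1 h2).
have gsD : v s - w s < D / 2 by lra.
pose r := Num.min t (s + d / 2).
have [rt rs1 rs2] : [/\ r <= t, s <= r & r - s < d].
  rewrite /r; case: (minr_cases t (s + d / 2)) => [][-> h]; split; lra.
have gr : D <= v r - w r.
  case: (ltP s r) => sr.
  - pose I := `]s, t]%classic.
    have Iu : forall u, I u -> w u < v u.
      move=> u; rewrite /I /= in_itv /= => /andP[su ut].
      rewrite ltNge; apply/negP => vw.
      have Au : A u by split => //; rewrite ut andbT; lra.
      have : u <= s by apply: ub_le_sup (proj2 hA) _ Au.
      lra.
    have I0 : I `<=` `[0, +oo[.
      move=> u; rewrite /I /= !in_itv /= andbT => /andP[su _]; lra.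
    have iI : is_interval I by apply: interval_is_interval.
    have Ir : I r by rewrite /I /= in_itv /= sr rt.
    have It : I t by rewrite /I /= in_itv /= lexx andbT; lra.
    have h1 : v t <= v r.
      apply: (vd I I0 iI) => // u Iu'.
      have := Iu u Iu'; have /andP[hw _] := wb u (proj1 (in0P u) (I0 u Iu')) .
      move=> h; lra.
    have h2 : w r <= w t.
      apply: (wc I I0 iI) => // u Iu'.
      have := Iu u Iu'; have /andP[_ hv] := vb u (proj1 (in0P u) (I0 u Iu')).
      move=> h; lra.
    rewrite /D; lra.
  - have rE : r = s by apply/eqP; rewrite eq_le sr rs1.
    have tE : t = s.
      move: rE; rewrite /r; case: (minr_cases t (s + d / 2)) => [][-> h] e; lra.
    by rewrite rE -tE /D.
have rs3 : - d < r - s by lra.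
have := Hd r (proj2 (in0P r) (le_trans s0 rs1)) (absI rs3 rs2).
move=> /absP[h1 h2]; lra.
Qed.

End Uniq.
Unset Implicit Arguments.
Theorem proposition2p1 (d : measure_display) (Ω : measurableType d)
  (R : realType) (P : probability Ω R) (B : R -> Ω -> R) (c : R) :
  brownian_motion P B -> 0 < c ->
  (forall m : nat, {ae P, forall w, (Tseq (fun t => B t w) c m < +oo)%E}) ->
  {ae P, forall w,
     is_solution (fun t => B t w) c (Upath (fun t => B t w) c) /\
     (forall v : R -> R, is_solution (fun t => B t w) c v ->
        forall t, 0 <= t -> v t = Upath (fun t => B t w) c t)}.
Proof.
move=> [_ Hc H0 _] hc HT.
have HT' := ae_foralln (P := fun m w => (Tseq (fun t => B t w) c m < +oo)%E) HT.
apply: (filterS3 _ _ Hc H0 HT') => w hcw h0w hTw.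
have hb0 : ctsw `[0, +oo[ (fun t => B t w) := proj1 (ctswP _ _) hcw.
have US := U_solution hc hb0 h0w hTw.
split => // v hv t t0; apply/eqP; rewrite eq_le; apply/andP; split.
  exact: uniq_le hv US t t0.
exact: uniq_le US hv t t0.
Qed.
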